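(* Let $n,k,\ell\ge1$ and let $P$ be an $(n,k,\ell)$ correlation problem with input distribution $\mu$. Suppose that for some $\delta$ with $0\le\delta\le1$ and some $r\ge0$, every rectangle $R=R_1\times\cdots\times R_n\subseteq\{1,\ldots,k\}^n$ with $\mathrm{adv}_a(R)\ge\delta$ satisfies $\mu(R)\le r$, for every $a\in\{1,\ldots,\ell\}^n$. Then every classical model with shared randomness in which $c$ bits are broadcast, having detection efficiency $\eta$ and error probability $\epsilon$, satisfies \[ \frac{1}{2^c}\,\eta^n\Big(1-\epsilon\,\frac{1}{1-\delta}\Big)\le \ell^n r . \]
   Context: An $(n,k,\ell)$ correlation problem with input distribution $\mu$ (a probability distribution on $\{1,\ldots,k\}^n$) is a family of probability distributions $P(\cdot|x)$ on outputs $a\in\{1,\ldots,\ell\}^n$, one for each input $x$ with $\mu(x)>0$. For $a\in\{1,\ldots,\ell\}^n$ let $\mathrm{adm}_a=\{x:P(a|x)>0\}$, and for a set $S$ of inputs let $\mathrm{adv}_a(S)=\mu(S\cap\mathrm{adm}_a)/\mu(S)$. A deterministic classical model with communication is a rooted protocol tree: each internal node is labeled by a party who broadcasts which child to go to, according to a partition of that party's input set $\{1,\ldots,k\}$ among the outgoing edges; each leaf $v$ carries local output functions $\lambda_{v,i}$ from $\{1,\ldots,k\}$ to $\{1,\ldots,\ell\}\cup\{\perp\}$ ($\perp$ = no detector click); on input $x$ the execution follows the tree to a leaf $v$ and party $i$ outputs $\lambda_{v,i}(x_i)$. The number of bits broadcast is $c=\sum\lceil\log t_j\rceil$, the $t_j$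 being the numbers of children of the nodes on the path taken (maximized over paths). A classical model with shared randomness is a probability distribution over such deterministic models, inducing output probabilities $Q(a|x)$. Let $C$ be the indicator that all outputs differ from $\perp$; the detection efficiency is $\eta=(\mathbb E_{x\sim\mu}[\sum_aQ(a|x)C])^{1/n}$; with $F$ the indicator of $P(a|x)=0$, the error probability is $\epsilon=\mathbb E_{x\sim\mu}[\sum_aQ(a|x)\,F\,C/\eta^n]$. *)

(* Defs.v *)
From HB Require Import structures.
From mathcomp Require Import all_boot all_order all_algebra.
Set Implicit Arguments. Unset Strict Implicit. Unset Printing Implicit Defensive.
Import Order.TTheory GRing.Theory Num.Theory.
Local Open Scope ring_scope.

Definition inputs (n k : nat) := {ffun 'I_n -> 'I_k}.
Definition outputs (n l : nat) := {ffun 'I_n -> 'I_l}.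

(* A leaf carries the local output functions
   lambda_{v,i} : 'I_k -> option 'I_l  (None = perp, no detector click).
   An internal node is labelled by a party i, has t children, and partitions
   party i's input set among the children via route : 'I_k -> 'I_t. *)
Inductive ptree (n k l : nat) : Type :=
| PLeaf of ('I_n -> 'I_k -> option 'I_l)
| PNode (i : 'I_n) (t : nat) of ('I_k -> 'I_t) & ('I_t -> ptree n k l).

Fixpoint leaf_out n k l (T : ptree n k l) (x : inputs n k) : 'I_n -> 'I_k -> option 'I_l :=
  match T with
  | PLeaf lam => lam
  | PNode i t route ch => leaf_out (ch (route (x i))) x
  end.

Definition run n k l (T : ptree n k l) (x : inputs n k) (i : 'I_n) : option 'I_l :=
  leaf_out T x i (x i).

Fixpoint path_bits n k l (T : ptree n k l) (x : inputs n k) : nat :=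
  match T with
  | PLeaf _ => 0
  | PNode i t route ch => (up_log 2 t + path_bits (ch (route (x i))) x)%N
  end.

Definition bits n k l (T : ptree n k l) : nat := \max_(x : inputs n k) path_bits T x.

(* Q(a|x) for a model with shared randomness given as a finite mixture
   (weights w over deterministic trees Ts), restricted to a with no perp. *)
Definition Qprob (R : numDomainType) n k l m (w : 'I_m -> R) (Ts : 'I_m -> ptree n k l)
  (a : outputs n l) (x : inputs n k) : R :=
  \sum_(j < m) w j * (if [forall i, run (Ts j) x i == Some (a i)] then 1 else 0).

(* E_x[ sum_a Q(a|x) C ] = eta^n *)
Definition detection_mass (R : numDomainType) n k l m (mu : inputs n k -> R)
  (w : 'I_m -> R) (Ts : 'I_m -> ptree n k l) : R :=
  \sum_(x : inputs n k) mu x * \sum_(a : outputs n l) Qprob w Ts a x.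

(* E_x[ sum_a Q(a|x) F C ]  (to be divided by eta^n) *)
Definition error_mass (R : numDomainType) n k l m (mu : inputs n k -> R)
  (P : inputs n k -> outputs n l -> R)
  (w : 'I_m -> R) (Ts : 'I_m -> ptree n k l) : R :=
  \sum_(x : inputs n k) mu x *
     \sum_(a : outputs n l) Qprob w Ts a x * (if P x a == 0 then 1 else 0).

Definition muS (R : numDomainType) n k (mu : inputs n k -> R) (S : {set inputs n k}) : R :=
  \sum_(x in S) mu x.

Definition adm (R : numDomainType) n k l (P : inputs n k -> outputs n l -> R)
  (a : outputs n l) : {set inputs n k} := [set x | 0 < P x a].

Definition adv (R : numFieldType) n k l (mu : inputs n k -> R)
  (P : inputs n k -> outputs n l -> R) (a : outputs n l) (S : {set inputs n k}) : R :=
  muS mu (S :&: adm P a) / muS mu S.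

Definition rectangle n k (Rs : 'I_n -> {set 'I_k}) : {set inputs n k} :=
  [set x : inputs n k | [forall i, x i \in Rs i]].

Definition is_distribution (R : numDomainType) (T : finType) (mu : T -> R) : Prop :=
  (forall x, 0 <= mu x) /\ \sum_x mu x = 1.

Definition is_correlation_problem (R : numDomainType) n k l (mu : inputs n k -> R)
  (P : inputs n k -> outputs n l -> R) : Prop :=
  forall x, 0 < mu x -> is_distribution (P x).

(* Main.v *)
Require Import Defs.
From HB Require Import structures.
From mathcomp Require Import all_boot all_order all_algebra.
From mathcomp Require Import lra zify.
Set Implicit Arguments. Unset Strict Implicit. Unset Printing Implicit Defensive.
Import Order.TTheory GRing.Theory Num.Theory.
Local Open Scope ring_scope.

Definition Sq n k (S : 'I_n -> {set 'I_k}) (i : 'I_n) t (route : 'I_k -> 'I_t) (q : 'I_t) :=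
  fun i' => S i' :&: (if i' == i then [set y | route y == q] else setT).

Lemma rect_split n k (S : 'I_n -> {set 'I_k}) (i : 'I_n) t (route : 'I_k -> 'I_t) (x : inputs n k) q :
 (x \in rectangle (Sq S i route q)) = (x \in rectangle S) && (route (x i) == q).
Proof.
rewrite !inE /Sq; apply/forallP/andP => [H|[/forallP H1 H2] i'].
  split; first by apply/forallP => i'; have := H i'; rewrite inE => /andP[].
  by have := H i; rewrite eqxx !inE => /andP[].
rewrite inE H1 /=; case: eqP => [->|]; by rewrite inE ?H2.
Qed.

Lemma sum_rect_split (R : numDomainType) n k (S : 'I_n -> {set 'I_k}) (i : 'I_n) t (route : 'I_k -> 'I_t) (g : inputs n k -> R) :
  \sum_(x in rectangle S) g x = \sum_(q < t) \sum_(x in rectangle (Sq S i route q)) g x.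
Proof.
rewrite (partition_big (fun x : inputs n k => route (x i)) predT) //=.
apply: eq_bigr => q _; apply: eq_bigl => x; by rewrite rect_split.
Qed.

Lemma rect_full n k (x : inputs n k) : x \in rectangle (fun _ => setT).
Proof. by rewrite inE; apply/forallP => i; rewrite inE. Qed.

Definition zz (R : numDomainType) n k l (P : inputs n k -> outputs n l -> R) x a : R :=
  if P x a == 0 then 1 else 0.

Lemma per_a (R : realFieldType) n k l (mu : inputs n k -> R) (P : inputs n k -> outputs n l -> R)
  (delta r : R) (a : outputs n l) (Rs : 'I_n -> {set 'I_k}) :
  is_distribution mu -> is_correlation_problem mu P ->
  0 <= delta -> delta <= 1 -> 0 <= r ->
  (delta <= adv mu P a (rectangle Rs) -> muS mu (rectangle Rs) <= r) ->
  (delta < 1 \/ \sum_(x in rectangle Rs) mu x * zz P x a = 0) ->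
  muS mu (rectangle Rs) <= r + (\sum_(x in rectangle Rs) mu x * zz P x a) * (1 - delta)^-1.
Proof.
move=> [mu0 _] HP d0 d1 r0 Hadv Hok.
set m := muS mu _; set e := \sum_(x in _) _.
set g := muS mu (rectangle Rs :&: adm P a).
have e0 : 0 <= e by apply: sumr_ge0 => x _; rewrite /zz; case: eqP; rewrite ?mulr1 ?mulr0.
have K0 : 0 <= (1 - delta)^-1 by rewrite invr_ge0 subr_ge0.
have m0 : 0 <= m by apply: sumr_ge0.
have mge : m = g + e.
  rewrite /g /muS.
  have -> : \sum_(x in rectangle Rs :&: adm P a) mu x = \sum_(x in rectangle Rs) mu x * (if 0 < P x a then 1 else 0).
    rewrite big_mkcond /= [RHS]big_mkcond /=; apply: eq_bigr => x _.
    rewrite in_setI; case: (x \in rectangle Rs); rewrite /= ?inE; case: (0 < P x a); by rewrite ?mulr1 ?mulr0.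
  rewrite /e -big_split /=; apply: eq_bigr => x _.
  have [mx0|mxp] := eqVneq (mu x) 0; first by rewrite mx0 !mul0r addr0.
  have mxp' : 0 < mu x by rewrite lt_def mxp mu0.
  have [Pge _] := HP x mxp'.
  have := Pge a; rewrite /zz le_eqVlt => /orP[/eqP<-|Pp]; first by rewrite eqxx ltxx mulr0 mulr1 add0r.
  by rewrite Pp (gt_eqF Pp) mulr1 mulr0 addr0.
case: (lerP delta (adv mu P a (rectangle Rs))) => Hd.
  have := Hadv Hd; rewrite -/m; have := mulr_ge0 e0 K0; lra.
have [mz|mnz] := eqVneq m 0; first by rewrite mz; have := mulr_ge0 e0 K0; lra.
have mp : 0 < m by rewrite lt_def mnz m0.
move: Hd; rewrite /adv -/m -/g ltr_pdivrMr // => Hg.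
case: Hok => [dl1|ez].
  have dp : 0 < 1 - delta by rewrite subr_gt0.
  have : m <= e * (1 - delta)^-1.
    by rewrite ler_pdivlMr //; nra.
  lra.
rewrite -/e in ez; nra.
Qed.

Definition ind (R : numDomainType) n k l (T : ptree n k l) (x : inputs n k) (a : outputs n l) : R :=
  if [forall i, run T x i == Some (a i)] then 1 else 0.

Definition Gt (R : numDomainType) n k l (mu : inputs n k -> R) (T : ptree n k l)
  (S : 'I_n -> {set 'I_k}) (h : inputs n k -> outputs n l -> R) : R :=
  \sum_(x in rectangle S) mu x * \sum_(a : outputs n l) ind R T x a * h x a.

Lemma Gt_node (R : numDomainType) n k l (mu : inputs n k -> R) i t route (ch : 'I_t -> ptree n k l) S h :
  Gt mu (PNode i route ch) S h = \sum_(q < t) Gt mu (ch q) (Sq S i route q) h.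
Proof.
rewrite /Gt (sum_rect_split _ i route); apply: eq_bigr => q _.
apply: eq_bigr => x; rewrite rect_split => /andP[_ /eqP Hq].
by congr (_ * _); apply: eq_bigr => a _; rewrite /ind /run /= Hq.
Qed.

Definition La n k l (S : 'I_n -> {set 'I_k}) (lam : 'I_n -> 'I_k -> option 'I_l) (a : outputs n l) :=
  fun i => S i :&: [set y | lam i y == Some (a i)].

Lemma rect_La n k l (S : 'I_n -> {set 'I_k}) lam (a : outputs n l) x :
  (x \in rectangle (La S lam a)) = (x \in rectangle S) && [forall i, run (PLeaf lam) x i == Some (a i)].
Proof.
rewrite !inE /La; apply/forallP/andP => [H|[/forallP H1 /forallP H2] i'].
  split; apply/forallP => i'; have := H i'; rewrite !inE => /andP[] //.
by rewrite !inE H1 /=; have := H2 i'.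
Qed.

Lemma Gt_leaf (R : numDomainType) n k l (mu : inputs n k -> R) (lam : 'I_n -> 'I_k -> option 'I_l) S h :
  Gt mu (PLeaf lam) S h = \sum_(a : outputs n l) \sum_(x in rectangle (La S lam a)) mu x * h x a.
Proof.
rewrite /Gt.
under eq_bigr do rewrite mulr_sumr.
rewrite exchange_big /=; apply: eq_bigr => a _.
rewrite big_mkcond [RHS]big_mkcond /=; apply: eq_bigr => x _.
rewrite rect_La /ind; case: (x \in rectangle S) => //=.
by case: ifP; rewrite ?mul1r ?mul0r ?mulr0.
Qed.

Lemma Gt_ge0 (R : numDomainType) n k l (mu : inputs n k -> R) (T : ptree n k l) S h :
  (forall x, 0 <= mu x) -> (forall x a, 0 <= h x a) -> 0 <= Gt mu T S h.
Proof.
move=> m0 h0; apply: sumr_ge0 => x _; apply: mulr_ge0 => //; apply: sumr_ge0 => a _.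
by apply: mulr_ge0 => //; rewrite /ind; case: ifP.
Qed.

Lemma zz_ge0 (R : numDomainType) n k l (P : inputs n k -> outputs n l -> R) x a : 0 <= zz P x a.
Proof. by rewrite /zz; case: ifP. Qed.

Lemma tree_bound (R : realFieldType) n k l (mu : inputs n k -> R) (P : inputs n k -> outputs n l -> R)
  (delta r : R) :
  is_distribution mu -> is_correlation_problem mu P ->
  0 <= delta -> delta <= 1 -> 0 <= r ->
  (forall (a : outputs n l) (Rs : 'I_n -> {set 'I_k}),
      delta <= adv mu P a (rectangle Rs) -> muS mu (rectangle Rs) <= r) ->
  forall (T : ptree n k l) S c,
  (forall x, x \in rectangle S -> (path_bits T x <= c)%N) ->
  (delta < 1 \/ Gt mu T S (zz P) = 0) ->
  Gt mu T S (fun _ _ => 1) <= (2 ^ c)%:R * (l%:R ^+ n * r) + Gt mu T S (zz P) * (1 - delta)^-1.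
Proof.
move=> Hmu HP d0 d1 r0 Hrect T.
have m0 := Hmu.1.
have K0 : 0 <= (1 - delta)^-1 by rewrite invr_ge0 subr_ge0.
have L0 : 0 <= l%:R ^+ n * r :> R by apply: mulr_ge0 => //; apply: exprn_ge0.
elim: T => [lam|i t route ch IH] S c Hb Hok.
  rewrite !Gt_leaf.
  have eok : forall a, delta < 1 \/ \sum_(x in rectangle (La S lam a)) mu x * zz P x a = 0.
    move=> a; case: Hok => [->|]; first by left.
    rewrite Gt_leaf => /psumr_eq0P H; right; apply: H => // b _.
    by apply: sumr_ge0 => x _; apply: mulr_ge0 => //; apply: zz_ge0.
  apply: (@le_trans _ _ (\sum_(a : outputs n l) (r + (\sum_(x in rectangle (La S lam a)) mu x * zz P x a) * (1 - delta)^-1))).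
    apply: ler_sum => a _; under eq_bigr do rewrite mulr1.
    have := per_a Hmu HP d0 d1 r0 (Hrect a (La S lam a)) (eok a); rewrite /muS; exact.

  rewrite big_split /= -mulr_suml lerD2r sumr_const card_ffun !card_ord.
  rewrite -[r *+ _]mulr_natl !natrX mulrA; apply: ler_wpM2r => //.
  rewrite -[X in X <= _]mul1r; apply: ler_wpM2r; first exact: exprn_ge0.
  by apply: exprn_ege1; rewrite ler1n.
have [Se|[x0 x0S]] := set_0Vmem (rectangle S).
  by rewrite /Gt Se !big_set0 mul0r addr0; apply: mulr_ge0.
have Hc := Hb x0 x0S; rewrite /= in Hc.
rewrite !Gt_node.
have okq : forall q, delta < 1 \/ Gt mu (ch q) (Sq S i route q) (zz P) = 0.
  move=> q; case: Hok => [->|]; first by left.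
  rewrite Gt_node => /psumr_eq0P H; right; apply: H => // b _.
  by apply: Gt_ge0 => // x a; apply: zz_ge0.
have bq : forall q x, x \in rectangle (Sq S i route q) -> (path_bits (ch q) x <= c - up_log 2 t)%N.
  move=> q x; rewrite rect_split => /andP[xS /eqP Hq].
  have := Hb x xS; rewrite /= Hq; lia.
apply: (@le_trans _ _ (\sum_(q < t) ((2 ^ (c - up_log 2 t))%:R * (l%:R ^+ n * r) + Gt mu (ch q) (Sq S i route q) (zz P) * (1 - delta)^-1))).
  by apply: ler_sum => q _; apply: IH => //; apply: bq.
rewrite big_split /= sumr_const card_ord -mulr_suml lerD2r.
rewrite -mulrnAl -mulr_natr -natrM ler_wpM2r // ler_nat mulnC.
have := @up_logP 2 t isT; move=> Ht.
apply: (@leq_trans (2 ^ up_log 2 t * 2 ^ (c - up_log 2 t))); first by rewrite leq_mul2r Ht orbT.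
by rewrite -expnD subnKC //; apply: leq_trans Hc; apply: leq_addr.
Qed.

Lemma mass_decomp (R : numDomainType) n k l m (mu : inputs n k -> R) (w : 'I_m -> R)
  (Ts : 'I_m -> ptree n k l) (h : inputs n k -> outputs n l -> R) :
  \sum_(x : inputs n k) mu x * \sum_(a : outputs n l) Qprob w Ts a x * h x a =
  \sum_(j < m) w j * Gt mu (Ts j) (fun _ => setT) h.
Proof.
rewrite /Gt /Qprob.
under eq_bigr do under eq_bigr do rewrite mulr_suml.
under eq_bigr do rewrite exchange_big mulr_sumr.
rewrite exchange_big; apply: eq_bigr => j _.
rewrite mulr_sumr; rewrite [RHS](eq_bigl predT) //; last by move=> x; rewrite rect_full.
apply: eq_bigr => x _; rewrite [RHS]mulrCA [in RHS]mulr_sumr; congr (_ * _).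
by apply: eq_bigr => a _; rewrite mulrA.
Qed.

Unset Implicit Arguments.

Theorem theorem2 (R : realFieldType) (n k l : nat)
  (mu : inputs n k -> R) (P : inputs n k -> outputs n l -> R)
  (delta r : R) (c m : nat) (w : 'I_m -> R) (Ts : 'I_m -> ptree n k l) (eta eps : R) :
  (0 < n)%N -> (0 < k)%N -> (0 < l)%N ->
  is_distribution mu ->
  is_correlation_problem mu P ->
  0 <= delta -> delta <= 1 -> 0 <= r ->
  (forall (a : outputs n l) (Rs : 'I_n -> {set 'I_k}),
      delta <= adv mu P a (rectangle Rs) -> muS mu (rectangle Rs) <= r) ->
  is_distribution w ->
  (forall j, (bits (Ts j) <= c)%N) ->
  0 <= eta -> eta ^+ n = detection_mass mu w Ts ->
  eps = error_mass mu P w Ts / eta ^+ n ->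
  (delta < 1 \/ eps = 0) ->
  (2%:R ^+ c)^-1 * eta ^+ n * (1 - eps * (1 - delta)^-1) <= l%:R ^+ n * r.
Proof.
move=> n0 k0 l0 Hmu HP d0 d1 r0 Hrect [w0 w1] Hbits e0 Hdet Heps Hd.
have L0 : 0 <= l%:R ^+ n * r :> R by apply: mulr_ge0 => //; apply: exprn_ge0.
have K0 : 0 <= (1 - delta)^-1 by rewrite invr_ge0 subr_ge0.
have [ez|enz] := eqVneq (eta ^+ n) 0.
  by rewrite ez mulr0 mul0r.
have Hdet' : detection_mass mu w Ts = \sum_(j < m) w j * Gt mu (Ts j) (fun _ => setT) (fun _ _ => 1).
  rewrite -mass_decomp /detection_mass; apply: eq_bigr => x _; congr (_ * _).
  by apply: eq_bigr => a _; rewrite mulr1.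
have Herr : error_mass mu P w Ts = \sum_(j < m) w j * Gt mu (Ts j) (fun _ => setT) (zz P).
  by rewrite -mass_decomp.
set err := error_mass mu P w Ts in Heps Herr.
have Hb : forall j x, x \in rectangle (fun _ => setT) -> (path_bits (Ts j) x <= c)%N.
  by move=> j x _; apply: leq_trans (Hbits j); rewrite /bits; exact: (@leq_bigmax _ (path_bits (Ts j)) x).
have Hper : forall j, w j * Gt mu (Ts j) (fun _ => setT) (fun _ _ => 1) <=
    w j * ((2 ^ c)%:R * (l%:R ^+ n * r) + Gt mu (Ts j) (fun _ => setT) (zz P) * (1 - delta)^-1).
  move=> j; case: Hd => [dl1|eps0].
    by apply: ler_wpM2l => //; apply: (tree_bound Hmu HP d0 d1 r0 Hrect (Hb j)); left.
  have err0 : err = 0.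
    by move: eps0; rewrite Heps => /eqP; rewrite mulf_eq0 invr_eq0 (negbTE enz) orbF => /eqP.
  move: err0; rewrite Herr => /psumr_eq0P H.
  have Hj : w j * Gt mu (Ts j) (fun _ => setT) (zz P) = 0.
    apply: H => // j' _; apply: mulr_ge0 => //; apply: Gt_ge0 => // [|x a]; [exact: Hmu.1 | exact: zz_ge0].
  move/eqP: Hj; rewrite mulf_eq0 => /orP[/eqP->|/eqP Ej]; first by rewrite !mul0r.
  by apply: ler_wpM2l => //; apply: (tree_bound Hmu HP d0 d1 r0 Hrect (Hb j)); right.
have Hsum : eta ^+ n <= (2 ^ c)%:R * (l%:R ^+ n * r) + err * (1 - delta)^-1.
  rewrite Hdet Hdet' Herr; apply: le_trans (ler_sum _ (fun j _ => Hper j)) _.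
  rewrite le_eqVlt; apply/orP; left; apply/eqP.
  under eq_bigr do rewrite mulrDr.
  rewrite big_split /=; congr (_ + _); first by rewrite -mulr_suml w1 mul1r.
  by rewrite mulr_suml; apply: eq_bigr => j _; rewrite mulrA.
have Hpos : 0 < (2%:R ^+ c : R) by apply: exprn_gt0.
rewrite -mulrA ler_pdivrMl // Heps natrX in Hsum *.
rewrite mulrBr mulr1 mulrA mulrCA divff // mulr1.
lra.
Qed.
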